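(* Let $n\ge 4$ be an integer, let $i,k\in\{1,\ldots,n\}$, and let $H\sim\text{Hyp}(n,i,k)$ be such that $\mathbb{E}(H)\in [1, \min\{i,k\}-2]$ and $\frac{(n-i)(n-k)}{n}>1$. Assume further that $\text{Var}(H)\ge 1$. Then $\mathbb{P}(H\ge \mathbb{E}(H)) \ge 0.049$.
   Context: $\text{Hyp}(n,i,k)$ denotes the hypergeometric distribution: the number of black marbles in a sample without replacement of size $k$ from an urn with $i$ black and $n-i$ white marbles, i.e. $\mathbb{P}(H=j)=\binom{i}{j}\binom{n-i}{k-j}/\binom{n}{k}$. One has $\mathbb{E}(H)=ik/n$ and $\text{Var}(H)=k\cdot\frac{i}{n}\cdot\frac{n-i}{n}\cdot\frac{n-k}{n-1}$. *)

(* Defs.v *)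
From mathcomp Require Import all_boot all_order all_algebra.
Set Implicit Arguments. Unset Strict Implicit. Unset Printing Implicit Defensive.
Import Order.TTheory GRing.Theory Num.Theory.
Local Open Scope ring_scope.

(* Hyp(n,i,k): number of black marbles in a sample of size k drawn without
   replacement from an urn with i black and n-i white marbles. *)
Definition hyp_pmf (R : fieldType) (n i k j : nat) : R :=
  ('C(i, j) * 'C(n - i, k - j))%:R / 'C(n, k)%:R.

Definition hyp_mean (R : fieldType) (n i k : nat) : R :=
  \sum_(j < k.+1) j%:R * hyp_pmf R n i k j.

Definition hyp_var (R : fieldType) (n i k : nat) : R :=
  \sum_(j < k.+1) (j%:R - hyp_mean R n i k) ^+ 2 * hyp_pmf R n i k j.

Definition hyp_tail_ge (R : realFieldType) (n i k : nat) (x : R) : R :=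
  \sum_(j < k.+1 | x <= j%:R) hyp_pmf R n i k j.

(* Main.v *)
Require Import Defs.
From mathcomp Require Import all_boot all_order all_algebra.
From mathcomp Require Import ring lra.
Set Implicit Arguments. Unset Strict Implicit. Unset Printing Implicit Defensive.
Import Order.TTheory GRing.Theory Num.Theory.
Local Open Scope ring_scope.

Section Aux.
Local Open Scope nat_scope.
Lemma G_ffact r : forall n i k, i <= n ->
  (\sum_(j < k.+1) j ^_ r * 'C(i, j) * 'C(n - i, k - j)) * n ^_ r
  = i ^_ r * k ^_ r * 'C(n, k).
Proof.
elim: r => [|r IH] n i k hin.
  rewrite !ffactn0 !mul1n muln1.
  rewrite (eq_bigr (fun j : 'I_k.+1 => 'C(i, j) * 'C(n - i, k - j))); last by move=> j _; rewrite mul1n.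
  by rewrite binomial.Vandermonde subnKC.
case: k => [|k].
  by rewrite big_ord_recl big_ord0 /= ffact0n /= !mul0n ?muln0.
rewrite big_ord_recl /= ffact0n /= !mul0n add0n.
case: i hin => [|i] hin.
  rewrite big1 ?mul0n // => j _; by rewrite bin0n /= muln0 mul0n.
case: n hin => [|n] // hin.
have -> : \sum_(j < k.+1) (bump 0 j) ^_ r.+1 * 'C(i.+1, bump 0 j) * 'C(n.+1 - i.+1, k.+1 - bump 0 j)
   = i.+1 * \sum_(j < k.+1) j ^_ r * 'C(i, j) * 'C(n - i, k - j).
  rewrite big_distrr; apply: eq_bigr => j _ /=.
  rewrite /bump /= add1n ffactSS !subSS.
  have := mul_bin_diag i.+1 j => /= H.
  transitivity (j ^_ r * (j.+1 * 'C(i.+1, j.+1)) * 'C(n - i, k - j)); first ring.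
  rewrite -H; ring.
rewrite ffactSS.
transitivity (i.+1 * n.+1 * ((\sum_(j < k.+1) j ^_ r * 'C(i, j) * 'C(n - i, k - j)) * n ^_ r)); first ring.
rewrite IH //.
rewrite !ffactSS.
have := mul_bin_diag n.+1 k => /= H.
transitivity (i.+1 * i ^_ r * k ^_ r * (n.+1 * 'C(n, k))); first ring.
rewrite H; ring.
Qed.
End Aux.
Lemma tail_bound (R : realFieldType) (I : finType) (w x : I -> R) (mu s m : R) :
  (forall j, 0 <= w j) -> \sum_j w j = 1 -> \sum_j x j * w j = mu ->
  \sum_j (x j - mu) ^+ 2 * w j = s -> 1 <= s ->
  \sum_j (x j - mu) ^+ 4 * w j = m -> m <= 5 * s ^+ 2 ->
  1 / 20 <= \sum_(j | mu <= x j) w j.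
Proof.
move=> w0 w1 wmu ws s1 wm ms.
set p := \sum_(j | mu <= x j) w j.
set a := \sum_(j | mu <= x j) (x j - mu) * w j.
have sY : \sum_j (x j - mu) * w j = 0.
  under eq_bigr do rewrite mulrBl.
  by rewrite sumrB wmu -mulr_sumr w1 mulr1 subrr.
have a0 : 0 <= a.
  by apply: sumr_ge0 => j h; apply: mulr_ge0 => //; rewrite subr_ge0.
have sabs : \sum_j `|x j - mu| * w j = 2 * a.
  rewrite (bigID (fun j => mu <= x j)) /=.
  have -> : \sum_(j | mu <= x j) `|x j - mu| * w j = a.
    by apply: eq_bigr => j h; rewrite ger0_norm // subr_ge0.
  have -> : \sum_(j | ~~ (mu <= x j)) `|x j - mu| * w j = - \sum_(j | ~~ (mu <= x j)) (x j - mu) * w j.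
    rewrite -sumrN; apply: eq_bigr => j h; rewrite ltr0_norm ?mulNr //.
    by rewrite subr_lt0 ltNge.
  move: sY; rewrite (bigID (fun j => mu <= x j)) /= -/a => h.
  have -> : \sum_(j | ~~ (mu <= x j)) (x j - mu) * w j = - a by lra.
  lra.
have sP : \sum_(j | mu <= x j) (x j - mu) ^+ 2 * w j <= s.
  rewrite -ws [X in _ <= X](bigID (fun j => mu <= x j)) /= lerDl.
  by apply: sumr_ge0 => j _; apply: mulr_ge0 => //; apply: sqr_ge0.
have CS : forall l, 0 <= l ^+ 2 * p - 2 * l * a + s.
  move=> l.
  have : 0 <= \sum_(j | mu <= x j) (l - (x j - mu)) ^+ 2 * w j.
    by apply: sumr_ge0 => j _; apply: mulr_ge0 => //; apply: sqr_ge0.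
  have -> : \sum_(j | mu <= x j) (l - (x j - mu)) ^+ 2 * w j =
     l ^+ 2 * p - 2 * l * a + \sum_(j | mu <= x j) (x j - mu) ^+ 2 * w j.
    rewrite /p /a mulr_sumr mulr_sumr -sumrB -big_split /=.
    by apply: eq_bigr => j _; ring.
  lra.
have HO : 4 * a ^+ 2 * s ^+ 3 <= 16 * a ^+ 4 * m.
  have pw : forall j, 3 * s ^+ 2 * (2 * a * `|x j - mu|) ^+ 2 * w j <=
      (2 * s ^+ 3 * (2 * a * `|x j - mu|) + (2 * a * `|x j - mu|) ^+ 4) * w j.
    move=> j; apply: ler_wpM2r => //.
    set u := 2 * a * `|x j - mu|.
    have u0 : 0 <= u by rewrite /u; apply: mulr_ge0 => //; lra.
    have s0 : 0 <= s by lra.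
    have : 0 <= u * (u - s) ^+ 2 * (u + 2 * s).
      apply: mulr_ge0; last lra. apply: mulr_ge0 => //; apply: sqr_ge0.
    move=> h; rewrite -subr_ge0; apply: le_trans h _; rewrite le_eqVlt; apply/orP; left; apply/eqP; ring.
  have := ler_sum (index_enum I) (fun j _ => pw j).
  have e1 : \sum_(j <- index_enum I | true) 3 * s ^+ 2 * (2 * a * `|x j - mu|) ^+ 2 * w j
      = 12 * a ^+ 2 * s ^+ 2 * \sum_j (x j - mu) ^+ 2 * w j.
    rewrite (mulr_sumr _ _ _ (12 * a ^+ 2 * s ^+ 2)); apply: eq_bigr => j _.
    have hn : `|x j - mu| ^+ 2 = (x j - mu) ^+ 2 by rewrite real_normK // num_real.
    transitivity (12 * a ^+ 2 * s ^+ 2 * (`|x j - mu| ^+ 2 * w j)); first ring.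
    by rewrite hn.
  have e2 : \sum_(j <- index_enum I | true) (2 * s ^+ 3 * (2 * a * `|x j - mu|) + (2 * a * `|x j - mu|) ^+ 4) * w j
      = 4 * s ^+ 3 * a * \sum_j `|x j - mu| * w j + 16 * a ^+ 4 * \sum_j (x j - mu) ^+ 4 * w j.
    rewrite (mulr_sumr _ _ _ (4 * s ^+ 3 * a)) (mulr_sumr _ _ _ (16 * a ^+ 4)) -big_split /=; apply: eq_bigr => j _.
    have hn : `|x j - mu| ^+ 2 = (x j - mu) ^+ 2 by rewrite real_normK // num_real.
    transitivity (4 * s ^+ 3 * a * (`|x j - mu| * w j) + 16 * a ^+ 4 * ((`|x j - mu| ^+ 2) ^+ 2 * w j)); first ring.
    rewrite hn; ring.
  move=> /(_ xpredT); rewrite e1 e2 sabs ws wm => h.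
  have -> : 4 * a ^+ 2 * s ^+ 3 = 12 * a ^+ 2 * s ^+ 2 * s - 4 * s ^+ 3 * a * (2 * a) by ring.
  lra.
have s0 : 0 < s by lra.
have [az|apos] := eqVneq a 0.
  exfalso.
  have : \sum_j `|x j - mu| * w j = 0 by rewrite sabs az mulr0.
  move/eqP; rewrite psumr_eq0; last by move=> j _; apply: mulr_ge0.
  move/allP => hall.
  have : s = 0.
    rewrite -ws big1 // => j _.
    have := hall j (mem_index_enum j); rewrite mulf_eq0 => /orP[|/eqP->]; last by rewrite mulr0.
    by rewrite normr_eq0 => /eqP->; rewrite expr0n mul0r.
  lra.
have ap : 0 < a by rewrite lt_def apos a0.
have h6 : a ^+ 2 <= p * s.
  have := CS (s / a).
  move=> h.
  have : 0 <= (s / a) ^+ 2 * p * a ^+ 2 - 2 * (s / a) * a * a ^+ 2 + s * a ^+ 2.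
    have -> : (s / a) ^+ 2 * p * a ^+ 2 - 2 * (s / a) * a * a ^+ 2 + s * a ^+ 2
       = ((s / a) ^+ 2 * p - 2 * (s / a) * a + s) * a ^+ 2 by ring.
    by apply: mulr_ge0 => //; apply: sqr_ge0.
  have -> : (s / a) ^+ 2 * p * a ^+ 2 - 2 * (s / a) * a * a ^+ 2 + s * a ^+ 2
      = s * (s * p - a ^+ 2) by field; rewrite gt_eqF.
  rewrite pmulr_rge0 // subr_ge0 => h'; lra.
have h7 : s ^+ 3 <= 4 * a ^+ 2 * m.
  have a2 : 0 < 4 * a ^+ 2 by apply: mulr_gt0 => //; apply: exprn_gt0.
  rewrite -(ler_pM2l a2).
  have -> : 4 * a ^+ 2 * (4 * a ^+ 2 * m) = 16 * a ^+ 4 * m by ring.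
  by have -> : 4 * a ^+ 2 * s ^+ 3 = 4 * a ^+ 2 * s ^+ 3 by [].
have m0 : 0 <= m.
  rewrite -wm; apply: sumr_ge0 => j _; apply: mulr_ge0 => //.
  by rewrite (exprM _ 2 2) sqr_ge0.
have h8 : s ^+ 3 <= 20 * p * s ^+ 3.
  apply: (le_trans h7).
  apply: (@le_trans _ _ (4 * (p * s) * m)).
    by rewrite -mulrA -(mulrA 4); apply: ler_wpM2l => //; apply: ler_wpM2r.
  have p0 : 0 <= p by apply: sumr_ge0.
  have -> : 20 * p * s ^+ 3 = 4 * (p * s) * (5 * s ^+ 2) by ring.
  apply: ler_wpM2l => //; apply: mulr_ge0 => //; apply: mulr_ge0 => //; lra.
have s3 : 0 < s ^+ 3 by apply: exprn_gt0.
have : 1 <= 20 * p.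
  by rewrite -(ler_pM2r s3) mul1r.
lra.
Qed.
Lemma natr_ffact (R : pzRingType) (j r : nat) :
  (j ^_ r)%:R = \prod_(l < r) (j%:R - l%:R) :> R.
Proof.
elim: r => [|r IH]; first by rewrite big_ord0.
rewrite ffactnSr big_ord_recr /= natrM -IH.
case: (leqP r j) => h; first by rewrite natrB.
have -> : j ^_ r = 0%N by rewrite ffact_small.
by rewrite !mul0r.
Qed.

Lemma sum_ff (R : realFieldType) n i k r : (i <= n)%N -> (k <= n)%N -> (r <= n)%N ->
  \sum_(j < k.+1) (\prod_(l < r) (j%:R - l%:R)) * hyp_pmf R n i k j
  = (i ^_ r * k ^_ r)%:R / (n ^_ r)%:R.
Proof.
move=> hi hk hr.
have G := G_ffact r k hi.
have c0 : ('C(n, k))%:R != 0 :> R by rewrite pnatr_eq0 -lt0n bin_gt0.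
have f0 : (n ^_ r)%:R != 0 :> R by rewrite pnatr_eq0 -lt0n ffact_gt0.
rewrite /hyp_pmf.
under eq_bigr do rewrite -natr_ffact mulrA -natrM.
rewrite -mulr_suml -natr_sum.
apply: (mulIf c0); apply: (mulIf f0).
rewrite mulfVK //.
under eq_bigr do rewrite mulnA.
rewrite -natrM G !natrM; field.
by rewrite f0.
Qed.

Definition Pr (R : pzRingType) (r j : nat) : R := \prod_(l < r) (j%:R - l%:R).
Definition Fr (R : fieldType) (n i k r : nat) : R := (i ^_ r * k ^_ r)%:R / (n ^_ r)%:R.

Lemma lin4 (R : realFieldType) n i k (c0 c1 c2 c3 c4 : R) :
  (i <= n)%N -> (k <= n)%N -> (4 <= n)%N ->
  \sum_(j < k.+1) (c0 * Pr R 0 j + c1 * Pr R 1 j + c2 * Pr R 2 j + c3 * Pr R 3 j + c4 * Pr R 4 j)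
      * hyp_pmf R n i k j
  = c0 * Fr R n i k 0 + c1 * Fr R n i k 1 + c2 * Fr R n i k 2 + c3 * Fr R n i k 3 + c4 * Fr R n i k 4.
Proof.
move=> hi hk hn.
under eq_bigr do rewrite !mulrDl -!mulrA.
rewrite !big_split /= -!mulr_sumr /Pr /Fr.
by rewrite !sum_ff // (leq_trans _ hn).
Qed.

Lemma ffR (R : comPzRingType) (m : nat) :
  [/\ (m ^_ 0)%:R = 1 :> R, (m ^_ 1)%:R = m%:R :> R,
      (m ^_ 2)%:R = m%:R * (m%:R - 1) :> R,
      (m ^_ 3)%:R = m%:R * (m%:R - 1) * (m%:R - 2) :> R &
      (m ^_ 4)%:R = m%:R * (m%:R - 1) * (m%:R - 2) * (m%:R - 3) :> R].
Proof.
rewrite !natr_ffact !big_ord_recr !big_ord0 /=.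
split; ring.
Qed.

Lemma key_ineq (R : realFieldType) (N I K : R) :
  4 <= N -> 0 <= I <= N -> 0 <= K <= N ->
  N ^+ 2 * (N - 1) <= I * (N - I) * (K * (N - K)) ->
  3 * (I * (N - I) * (K * (N - K))) ^+ 2 / (N ^+ 4 * (N - 1) ^+ 2)
  + I * (N - I) * (K * (N - K)) *
    ((N - 1) * N ^+ 2 * (N * (N + 1) - 6 * (I * (N - I)) - 6 * (K * (N - K)))
     + 6 * (I * (N - I) * (K * (N - K))) * (5 * N - 6))
    / (N ^+ 4 * (N - 1) ^+ 2 * (N - 2) * (N - 3))
  <= 5 * (I * (N - I) * (K * (N - K)) / (N ^+ 2 * (N - 1))) ^+ 2.
Proof.
move=> hN /andP[hI0 hI1] /andP[hK0 hK1].
set a := I * (N - I). set b := K * (N - K). move=> hD.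
set P := (N - 1) * N ^+ 2.
have a0 : 0 <= a by apply: mulr_ge0 => //; lra.
have b0 : 0 <= b by apply: mulr_ge0 => //; lra.
have P0 : 0 <= P by apply: mulr_ge0; [lra | apply: sqr_ge0].
have D0 : 0 <= a * b by apply: mulr_ge0.
have Na : 4 * a <= N ^+ 2.
  have : 0 <= (N - 2 * I) ^+ 2 by apply: sqr_ge0.
  rewrite /a; move=> h; rewrite -subr_ge0; apply: le_trans h _; rewrite le_eqVlt eq_sym; apply/orP; left; apply/eqP; ring.
have Nb : 4 * b <= N ^+ 2.
  have : 0 <= (N - 2 * K) ^+ 2 by apply: sqr_ge0.
  rewrite /b; move=> h; rewrite -subr_ge0; apply: le_trans h _; rewrite le_eqVlt eq_sym; apply/orP; left; apply/eqP; ring.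
have f1 : 0 <= (a * b - P) * (N * (N + 1)).
  apply: mulr_ge0; first by rewrite subr_ge0 /P mulrC.
  apply: mulr_ge0; lra.
have f2 : 0 <= 6 * (N - 1) * (a * (N ^+ 2 - 4 * b) + b * (N ^+ 2 - 4 * a)).
  apply: mulr_ge0; first lra.
  apply: addr_ge0; apply: mulr_ge0 => //; lra.
have f3 : 0 <= a * b * (N ^+ 2 + 7 * N).
  apply: mulr_ge0 => //; apply: addr_ge0; [apply: sqr_ge0 | lra].
have Hnum : P * (N * (N + 1) - 6 * a - 6 * b) + 6 * (a * b) * (5 * N - 6)
            <= 2 * (a * b) * ((N - 2) * (N - 3)).
  rewrite -subr_ge0.
  have -> : 2 * (a * b) * ((N - 2) * (N - 3)) - (P * (N * (N + 1) - 6 * a - 6 * b) + 6 * (a * b) * (5 * N - 6))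
     = (a * b - P) * (N * (N + 1)) + 6 * (N - 1) * (a * (N ^+ 2 - 4 * b) + b * (N ^+ 2 - 4 * a)) + a * b * (N ^+ 2 + 7 * N).
    rewrite /P; ring.
  by apply: addr_ge0; [apply: addr_ge0|].
have N1 : 0 < N - 1 by lra.
have N2 : 0 < N - 2 by lra.
have N3 : 0 < N - 3 by lra.
have N0 : 0 < N by lra.
set Q := N ^+ 4 * (N - 1) ^+ 2 * (N - 2) * (N - 3).
have Q0 : 0 < Q.
  rewrite /Q; apply: mulr_gt0 => //; apply: mulr_gt0 => //; apply: mulr_gt0; apply: exprn_gt0 => //.
rewrite -subr_ge0.
have -> : 5 * (a * b / (N ^+ 2 * (N - 1))) ^+ 2 -
  (3 * (a * b) ^+ 2 / (N ^+ 4 * (N - 1) ^+ 2) +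
   a * b * ((N - 1) * N ^+ 2 * (N * (N + 1) - 6 * a - 6 * b) + 6 * (a * b) * (5 * N - 6)) / Q)
  = a * b * (2 * (a * b) * ((N - 2) * (N - 3)) - (P * (N * (N + 1) - 6 * a - 6 * b) + 6 * (a * b) * (5 * N - 6))) / Q.
  rewrite /Q /P; field.
  by rewrite !gt_eqF.
apply: divr_ge0; last exact: ltW.
by apply: mulr_ge0 => //; rewrite subr_ge0.
Qed.

Theorem corollary1 (R : realFieldType) (n i k : nat) :
  (4 <= n)%N -> (1 <= i <= n)%N -> (1 <= k <= n)%N ->
  1 <= hyp_mean R n i k ->
  hyp_mean R n i k <= (minn i k)%:R - 2 ->
  ((n - i) * (n - k))%:R / n%:R > 1 :> R ->
  1 <= hyp_var R n i k ->
  hyp_tail_ge n i k (hyp_mean R n i k) >= 49 / 1000.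
Proof.
move=> hn /andP[_ hin] /andP[_ hkn] _ _ _ hv.
have N4 : 4 <= n%:R :> R by rewrite (ler_nat R 4 n).
have nz : [/\ n%:R != 0 :> R, n%:R - 1 != 0 :> R, n%:R - 2 != 0 :> R & n%:R - 3 != 0 :> R].
  by split; rewrite gt_eqF //; lra.
case: nz => nz0 nz1 nz2 nz3.
have Fsub : forall (c0 c1 c2 c3 c4 : R),
  c0 * Fr R n i k 0 + c1 * Fr R n i k 1 + c2 * Fr R n i k 2 + c3 * Fr R n i k 3 + c4 * Fr R n i k 4
  = c0 + c1 * (i%:R * k%:R / n%:R)
    + c2 * (i%:R * (i%:R - 1) * (k%:R * (k%:R - 1)) / (n%:R * (n%:R - 1)))
    + c3 * (i%:R * (i%:R - 1) * (i%:R - 2) * (k%:R * (k%:R - 1) * (k%:R - 2)) / (n%:R * (n%:R - 1) * (n%:R - 2)))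
    + c4 * (i%:R * (i%:R - 1) * (i%:R - 2) * (i%:R - 3) * (k%:R * (k%:R - 1) * (k%:R - 2) * (k%:R - 3))
            / (n%:R * (n%:R - 1) * (n%:R - 2) * (n%:R - 3))).
  move=> c0 c1 c2 c3 c4.
  have FrE : forall r, Fr R n i k r = (i ^_ r)%:R * (k ^_ r)%:R / (n ^_ r)%:R.
    by move=> r; rewrite /Fr natrM.
  rewrite !FrE !ffactn0 !ffactn1.
  case: (ffR R i) => _ _ -> -> ->.
  case: (ffR R k) => _ _ -> -> ->.
  case: (ffR R n) => _ _ -> -> ->.
  by rewrite divr1 mulr1 mulr1.
have hw : \sum_(j < k.+1) hyp_pmf R n i k j = 1.
  transitivity (\sum_(j < k.+1) (1 * Pr R 0 j + 0 * Pr R 1 j + 0 * Pr R 2 j + 0 * Pr R 3 j + 0 * Pr R 4 j)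
      * hyp_pmf R n i k j).
    by apply: eq_bigr => j _; rewrite /Pr !big_ord_recr !big_ord0 /=; ring.
  rewrite lin4 // Fsub; field; by rewrite nz0 nz1 nz2 nz3.
set mu := i%:R * k%:R / n%:R : R.
have hm : hyp_mean R n i k = mu.
  rewrite /hyp_mean.
  transitivity (\sum_(j < k.+1) (0 * Pr R 0 j + 1 * Pr R 1 j + 0 * Pr R 2 j + 0 * Pr R 3 j + 0 * Pr R 4 j)
      * hyp_pmf R n i k j).
    by apply: eq_bigr => j _; rewrite /Pr !big_ord_recr !big_ord0 /=; ring.
  rewrite lin4 // Fsub /mu; field; by rewrite nz0 nz1 nz2 nz3.
set a := i%:R * (n%:R - i%:R) : R.
set b := k%:R * (n%:R - k%:R) : R.
have hs : hyp_var R n i k = a * b / (n%:R ^+ 2 * (n%:R - 1)).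
  rewrite /hyp_var hm.
  transitivity (\sum_(j < k.+1) (mu ^+ 2 * Pr R 0 j + (1 - 2 * mu) * Pr R 1 j + 1 * Pr R 2 j + 0 * Pr R 3 j + 0 * Pr R 4 j)
      * hyp_pmf R n i k j).
    by apply: eq_bigr => j _; rewrite /Pr !big_ord_recr !big_ord0 /=; ring.
  rewrite lin4 // Fsub /mu /a /b; field; by rewrite nz0 nz1 nz2 nz3.
set m := \sum_(j < k.+1) (j%:R - mu) ^+ 4 * hyp_pmf R n i k j.
have h4 : m = 3 * (a * b) ^+ 2 / (n%:R ^+ 4 * (n%:R - 1) ^+ 2)
  + a * b *
    ((n%:R - 1) * n%:R ^+ 2 * (n%:R * (n%:R + 1) - 6 * a - 6 * b)
     + 6 * (a * b) * (5 * n%:R - 6))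
    / (n%:R ^+ 4 * (n%:R - 1) ^+ 2 * (n%:R - 2) * (n%:R - 3)).
  rewrite /m.
  transitivity (\sum_(j < k.+1) (mu ^+ 4 * Pr R 0 j + (1 - 4 * mu + 6 * mu ^+ 2 - 4 * mu ^+ 3) * Pr R 1 j
      + (7 - 12 * mu + 6 * mu ^+ 2) * Pr R 2 j + (6 - 4 * mu) * Pr R 3 j + 1 * Pr R 4 j)
      * hyp_pmf R n i k j).
    by apply: eq_bigr => j _; rewrite /Pr !big_ord_recr !big_ord0 /=; ring.
  rewrite lin4 // Fsub /mu /a /b; field; by rewrite nz0 nz1 nz2 nz3.
have hD : n%:R ^+ 2 * (n%:R - 1) <= a * b.
  have p0 : 0 < n%:R ^+ 2 * (n%:R - 1) :> R.
    apply: mulr_gt0; [apply: exprn_gt0 |]; lra.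
  by move: hv; rewrite hs ler_pdivlMr // mul1r.
have hms : m <= 5 * hyp_var R n i k ^+ 2.
  rewrite h4 hs; apply: key_ineq => //; apply/andP; split; rewrite ?ler0n // ler_nat //.
rewrite /hyp_tail_ge hm.
have := @tail_bound R 'I_k.+1 (fun j => hyp_pmf R n i k j) (fun j => (nat_of_ord j)%:R) mu
  (hyp_var R n i k) m.
move=> H.
have : 1 / 20 <= \sum_(j < k.+1 | mu <= j%:R) hyp_pmf R n i k j.
  apply: H => //.
  - by move=> j; rewrite /hyp_pmf divr_ge0 // ler0n.
  - by rewrite -hm.
lra.
Qed.
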